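(* Let $a$ be a positive integer and let $\alpha,\beta$ be $\tilde{\mathbb N}$-compositions. Then $$\varphi\big(M_{(a,\alpha*\beta)}\big)=(-1)^{\ell_\varepsilon(\alpha)+\ell_\varepsilon(\beta)}M_{(a,\bar\alpha*\bar\beta)}.$$
   Context: $\tilde{\mathbb N}=\mathbb N\cup\{\varepsilon\}$ with $0+\varepsilon=\varepsilon+\varepsilon=\varepsilon$ and $n+\varepsilon=n$ for integers $n\ge1$. $\mathbf{k}$ is a commutative ring containing $\mathbb Q$; $\mathbf{k}[[X]]_{\tilde{\mathbb N}}$, $X=\{x_1<x_2<\cdots\}$, is the algebra of possibly infinite linear combinations of formal monomials $\prod x_i^{f(x_i)}$ with $f$ finitely supported $\tilde{\mathbb N}$-valued, multiplied by adding exponents. An $\tilde{\mathbb N}$-composition is a finite (possibly empty) sequence of elements of $\{\varepsilon,1,2,\dots\}$; $M_{(\alpha_1,\dots,\alpha_k)}=\sum_{1\le i_1<\cdots<i_k}x_{i_1}^{\alpha_1}\cdots x_{i_k}^{\alpha_k}$, $M_\emptyset=1$, and $\mathrm{WCQSym}$ is their (free) $\mathbf k$-span; $\mathrm{QSym}$ is the span of $M_\alpha$ with all entries positive integers. The quasi-shuffle product $*$ on formal linear combinations of $\tilde{\mathbb N}$-compositions is bilinear with $\emptyset*\gamma=\gamma*\emptyset=\gamma$ and $(c,\gamma)*(d,\delta)=(c,\gamma*(d,\delta))+(d,(c,\gamma)*\delta)+(c+d,\gamma*\delta)$; $M$ is extended linearly, and $(a,\cdot)$ (prepending $a$) is extended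 linearly. $\ell_\varepsilon(\alpha)$ is the number of entries equal to $\varepsilon$, $\bar\alpha$ is $\alpha$ with its $\varepsilon$ entries deleted. $\mathcal C_\varepsilon$ is the set of $\tilde{\mathbb N}$-compositions with first entry $\varepsilon$, $\mathcal C_N$ the set of all others. $\varphi:\mathrm{WCQSym}\to\mathrm{QSym}$ is the $\mathbf k$-linear map with $\varphi(M_\gamma)=(-1)^{\ell_\varepsilon(\gamma)}M_{\bar\gamma}$ for $\gamma\in\mathcal C_N$ and $\varphi(M_\gamma)=0$ for $\gamma\in\mathcal C_\varepsilon$. *)

(* Defs.v *)
From mathcomp Require Import all_boot all_algebra.
Set Implicit Arguments. Unset Strict Implicit. Unset Printing Implicit Defensive.
Import GRing.Theory.
Local Open Scope ring_scope.

(* Encoding of \tilde N-compositions: an entry is a nat, where 0 encodes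
   epsilon and n >= 1 encodes the positive integer n.  With this encoding the
   addition of \tilde N (restricted to {eps,1,2,...}) is exactly addn:
   eps+eps=eps, n+eps=n, n+m=n+m. *)
Definition eps : nat := 0%N.
Definition ncomp := seq nat.

Definition leps (al : ncomp) : nat := count (fun x => x == eps) al.
Definition cbar (al : ncomp) : ncomp := filter (fun x => x != eps) al.

Definition in_Ceps (al : ncomp) : bool :=
  if al is x :: _ then x == eps else false.

(* quasi-shuffle of two compositions, as a multiset (list) of compositions,
   each with coefficient 1 *)
Fixpoint qsh (s t : ncomp) {struct s} : seq ncomp :=
  match s with
  | [::] => [:: t]
  | c :: s' =>
    let fix qsh_s (t : ncomp) : seq ncomp :=
      match t with
      | [::] => [:: s]
      | d :: t' =>
          [seq c :: u | u <- qsh s' t] ++ [seq d :: u | u <- qsh_s t']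
          ++ [seq (c + d)%N :: u | u <- qsh s' t']
      end
    in qsh_s t
  end.

(* Formal k-linear combinations of compositions, i.e. elements
   sum_i c_i M_{gamma_i} of WCQSym (the M_gamma form a basis). *)
Definition lc (k : Type) := seq (k * ncomp).

Definition coef (k : nmodType) (u : lc k) (g : ncomp) : k :=
  \sum_(p <- u | p.2 == g) p.1.

(* M_{(a, alpha * beta)} : quasi-shuffle, then prepend a (linearly) *)
Definition M_prepend_qsh (k : pzSemiRingType) (a : nat) (al be : ncomp) : lc k :=
  [seq (1, a :: g) | g <- qsh al be].

Definition phi_basis (k : pzRingType) (g : ncomp) : lc k :=
  if in_Ceps g then [::] else [:: ((-1) ^+ leps g, cbar g)].

Definition phi (k : pzRingType) (u : lc k) : lc k :=
  flatten [seq [seq (p.1 * q.1, q.2) | q <- phi_basis k p.2] | p <- u].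

Definition lc_scale (k : pzRingType) (c : k) (u : lc k) : lc k :=
  [seq (c * p.1, p.2) | p <- u].

(* Main.v *)
Require Import Defs.
From mathcomp Require Import all_boot all_algebra ring.
Import GRing.Theory.
Local Open Scope ring_scope.

Section S.
Variable k : comUnitRingType.

Definition Sg (L : seq ncomp) (f : ncomp -> k) :=
  \sum_(g <- L) (-1) ^+ leps g * f (cbar g).
Definition Cn (L : seq ncomp) (f : ncomp -> k) := \sum_(g <- L) f g.

Lemma Sg_cat L1 L2 f : Sg (L1 ++ L2) f = Sg L1 f + Sg L2 f.
Proof. by rewrite /Sg big_cat. Qed.
Lemma Cn_cat L1 L2 f : Cn (L1 ++ L2) f = Cn L1 f + Cn L2 f.
Proof. by rewrite /Cn big_cat. Qed.

Lemma Sg_cons_nz c L f : c != 0%N ->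
  Sg [seq c :: u | u <- L] f = Sg L (fun x => f (c :: x)).
Proof.
move=> hc; rewrite /Sg big_map; apply: eq_bigr => u _.
by rewrite /leps /cbar /= /eps (negbTE hc) /= add0n.
Qed.
Lemma Sg_cons_z L f :
  Sg [seq 0%N :: u | u <- L] f = - Sg L f.
Proof.
rewrite /Sg big_map -sumrN; apply: eq_bigr => u _.
by rewrite /leps /cbar /= exprS mulN1r mulNr.
Qed.
Lemma Cn_cons c L f : Cn [seq c :: u | u <- L] f = Cn L (fun x => f (c :: x)).
Proof. by rewrite /Cn big_map. Qed.

Lemma qsh_nil_r s : qsh s [::] = [:: s].
Proof. by case: s. Qed.

Lemma main s t f : Sg (qsh s t) f =
  (-1) ^+ (leps s + leps t) * Cn (qsh (cbar s) (cbar t)) f.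
Proof.
elim: s t f => [|c s IHs] t f.
  rewrite /Sg /Cn /= !big_seq1 /leps /=; by [].
elim: t f => [|d t IHt] f.
  rewrite qsh_nil_r qsh_nil_r /Sg /Cn !big_seq1 /leps /= addn0; by [].
have E : qsh (c :: s) (d :: t) =
  [seq c :: u | u <- qsh s (d :: t)] ++ [seq d :: u | u <- qsh (c :: s) t]
  ++ [seq (c + d)%N :: u | u <- qsh s t] by [].
rewrite E !Sg_cat.
have lc : forall x l, leps (x :: l) = ((x == 0%N) + leps l)%N by [].
have cc : forall x l, cbar (x :: l) = if x != 0%N then x :: cbar l else cbar l by [].
case: (eqVneq c 0%N) IHt => [->|hc] IHt; case: (eqVneq d 0%N) IHt => [->|hd] IHt.
- rewrite addn0 !Sg_cons_z IHs IHt IHs !lc !cc /=.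
  rewrite !exprD !expr1; ring.
- rewrite add0n Sg_cons_z !Sg_cons_nz // IHs IHt IHs !lc !cc /= hd /=.
  rewrite !exprD !expr1; ring.
- rewrite addn0 Sg_cons_z !Sg_cons_nz // IHs IHt IHs !lc !cc /= hc /=.
  rewrite !exprD !expr1; ring.
- have hcd : (c + d)%N != 0%N by rewrite addn_eq0 negb_and hc.
  have ccn : forall x l, x != 0%N -> cbar (x :: l) = x :: cbar l.
    by move=> x l hx; rewrite cc hx.
  have lcn : forall x l, x != 0%N -> leps (x :: l) = leps l.
    by move=> x l hx; rewrite lc (negbTE hx).
  rewrite !Sg_cons_nz // IHs IHt IHs !ccn // !lcn //.
  have E2 : qsh (c :: cbar s) (d :: cbar t) =
  [seq c :: u | u <- qsh (cbar s) (d :: cbar t)] ++ [seq d :: u | u <- qsh (c :: cbar s) (cbar t)]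
  ++ [seq (c + d)%N :: u | u <- qsh (cbar s) (cbar t)] by [].
  rewrite E2 !Cn_cat !Cn_cons; ring.
Qed.

Lemma lhs_eq (a : nat) (ha : (0 < a)%N) L h :
  coef (phi [seq (1 : k, a :: g) | g <- L]) h = Sg L (fun x => ((a :: x) == h)%:R).
Proof.
elim: L => [|g L IH]; first by rewrite /coef /Sg !big_nil.
have -> : phi [seq (1 : k, a :: g0) | g0 <- g :: L] =
  [seq (1 * q.1, q.2) | q <- phi_basis k (a :: g)] ++ phi [seq (1 : k, a :: g) | g <- L] by [].
have ha' : (a == 0%N) = false by case: (a) ha.
rewrite /coef big_cat; rewrite /coef in IH; rewrite IH /Sg big_cons; congr (_ + _).
rewrite /phi_basis /= ha' /= big_cons big_nil addr0 mul1r.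
rewrite add0n /=.
by case: eqP => _; rewrite ?mulr1 ?mulr0.
Qed.

Lemma rhs_eq (a : nat) (c : k) L h :
  coef (lc_scale c [seq (1 : k, a :: g) | g <- L]) h = c * Cn L (fun x => ((a :: x) == h)%:R).
Proof.
elim: L => [|g L IH]; first by rewrite /coef /Cn !big_nil mulr0.
rewrite /coef /Cn /= !big_cons -/(coef _ h) IH /Cn mulrDr.
by case: eqP => _; rewrite ?mulr1 ?mulr0 ?add0r.
Qed.
End S.

Theorem lemma3p5 (k : comUnitRingType)
  (hQ : forall n : nat, (n.+1)%:R \is a @GRing.unit k)
  (a : nat) (ha : (0 < a)%N) (al be : ncomp) :
  coef (phi (M_prepend_qsh k a al be)) =1
  coef (lc_scale ((-1) ^+ (leps al + leps be)) (M_prepend_qsh k a (cbar al) (cbar be))).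
Proof.
move=> h; rewrite /M_prepend_qsh lhs_eq // rhs_eq; exact: main.
Qed.
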